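(* Let $\mathbb{F}$ be a field and $p$ a prime. Let $G$ be an irreducible subgroup of $\widetilde{\mathrm{M}}(p,\mathbb{F})$ whose diagonal subgroup $A=G\cap\mathrm{D}(p,\mathbb{F})$ is not contained in the group of scalar matrices. Suppose that $w\in\mathrm{GL}(p,\mathbb{F})$ satisfies $w^{-1}Gw\le\widetilde{\mathrm{M}}(p,\mathbb{F})$ and $w^{-1}Aw\le \mathrm{D}(p,\mathbb{F})$. Then $w$ is monomial; furthermore, if $\mathbb{F}$ is algebraically closed, then some scalar multiple of $w$ lies in $\widetilde{\mathrm{M}}(p,\mathbb{F})$.
   Context: $\mathrm{D}(p,\mathbb{F})$ is the group of invertible diagonal $p\times p$ matrices over $\mathbb{F}$. $\widetilde{\mathrm{M}}(p,\mathbb{F})$ denotes the group of all $p\times p$ monomial matrices whose non-zero entries are roots of unity in $\mathbb{F}$. *)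

(* Defs.v *)
From mathcomp Require Import all_boot all_order all_algebra all_fingroup.
Set Implicit Arguments. Unset Strict Implicit. Unset Printing Implicit Defensive.
Import GRing.Theory.
Local Open Scope ring_scope.

Section Defs.
Variables (F : fieldType) (n : nat).

Definition root_of_unity (x : F) : Prop := exists k : nat, (0 < k)%N /\ x ^+ k = 1.

Definition monomial_mx (A : 'M[F]_n) : Prop :=
  exists s : 'S_n, forall i j, A i j != 0 <-> j = s i.

Definition Mtilde (A : 'M[F]_n) : Prop :=
  monomial_mx A /\ forall i j, A i j != 0 -> root_of_unity (A i j).

Definition diagD (A : 'M[F]_n) : Prop := is_diag_mx A /\ A \in unitmx.

Definition scalarZ (A : 'M[F]_n) : Prop := exists c : F, c != 0 /\ A = c%:M.

Definition is_subgroup_GL (G : 'M[F]_n -> Prop) : Prop :=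
  G 1%:M /\ (forall g, G g -> g \in unitmx) /\
  (forall g h, G g -> G h -> G (g *m h)) /\ (forall g, G g -> G (invmx g)).

Definition irreducible_mxgroup (G : 'M[F]_n -> Prop) : Prop :=
  (0 < n)%N /\
  forall U : 'M[F]_n, (forall g, G g -> stablemx U g) ->
    \rank U = 0%N \/ \rank U = n.
End Defs.

(* Main.v *)
From Stdlib Require Import Classical ClassicalEpsilon.
Require Import Defs.
From mathcomp Require Import all_boot all_order all_algebra all_fingroup.
Local Open Scope ring_scope.

Module Helpers.
Import GRing.Theory.
Local Open Scope ring_scope.

Definition pb (P : Prop) : bool := if excluded_middle_informative P then true else false.
Lemma pbP (P : Prop) : reflect P (pb P).
Proof. rewrite /pb; case: excluded_middle_informative => h; constructor; done. Qed.

Section H.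
Variables (F : fieldType) (p : nat).
Implicit Types (M N : 'M[F]_p).

Lemma mulmx_row1 M N i j c : (forall k, k != c -> M i k = 0) ->
  (M *m N) i j = M i c * N c j.
Proof.
move=> H; rewrite mxE (bigD1 c) //= big1 ?addr0 // => k /H ->; by rewrite mul0r.
Qed.

Lemma mulmx_col1 M N i j c : (forall k, k != c -> N k j = 0) ->
  (M *m N) i j = M i c * N c j.
Proof.
move=> H; rewrite mxE (bigD1 c) //= big1 ?addr0 // => k /H ->; by rewrite mulr0.
Qed.

Lemma unit_row_nz M i : M \in unitmx -> exists j, M i j != 0.
Proof.
move=> U; apply: NNPP => H.
have := mulmxV U; move/matrixP/(_ i i); rewrite !mxE eqxx /= big1 => [|k _].
  by move/eqP; rewrite eq_sym oner_eq0.
case: (eqVneq (M i k) 0) => [->|h]; first by rewrite mul0r.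
by case: H; exists k.
Qed.

Lemma unit_col_nz M j : M \in unitmx -> exists i, M i j != 0.
Proof.
move=> U; apply: NNPP => H.
have := mulVmx U; move/matrixP/(_ j j); rewrite !mxE eqxx /= big1 => [|k _].
  by move/eqP; rewrite eq_sym oner_eq0.
case: (eqVneq (M k j) 0) => [->|h]; first by rewrite mulr0.
by case: H; exists k.
Qed.

Lemma diag_nz M i : diagD M -> M i i != 0.
Proof.
case=> /is_diag_mxP D U; apply/negP => /eqP Z.
have := mulmxV U; move/matrixP/(_ i i); rewrite (mulmx_row1 M (invmx M) i i i) ?Z ?mul0r.
  by rewrite !mxE eqxx /= => /eqP; rewrite eq_sym oner_eq0.
by move=> k kn; apply: D; rewrite eq_sym.

Qed.

Lemma root_mul (x y : F) : Defs.root_of_unity x -> Defs.root_of_unity y -> Defs.root_of_unity (x * y).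
Proof.
case=> [k [k0 hk]] [l [l0 hl]]; exists (k * l)%N; split; first by rewrite muln_gt0 k0.
by rewrite exprMn exprM hk expr1n mulnC exprM hl expr1n mulr1.
Qed.

Lemma root_inv (x : F) : Defs.root_of_unity x -> Defs.root_of_unity x^-1.
Proof. case=> [k [k0 hk]]; exists k; split => //; by rewrite exprVn hk invr1. Qed.


End H.
Arguments mulmx_row1 {F p}. Arguments mulmx_col1 {F p}. Arguments unit_row_nz {F p}.
Arguments unit_col_nz {F p}. Arguments diag_nz {F p}.


Lemma mono_off (F : fieldType) (p : nat) (g : 'M[F]_p) (s : 'S_p) i a c :
  (forall i j, g i j != 0 <-> j = s i) -> g i a != 0 -> c != a -> g i c = 0.
Proof.
move=> H ha ca; apply/eqP; apply: contraNT ca => hc.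
by apply/eqP; rewrite (proj1 (H _ _) hc) (proj1 (H _ _) ha).
Qed.

Lemma transG (F : fieldType) (p : nat) (G : 'M[F]_p -> Prop) :
  is_subgroup_GL G -> (forall g, G g -> Mtilde g) -> irreducible_mxgroup G ->
  forall i j, exists g, G g /\ g i j != 0.
Proof.
move=> [G1 [Gu [GM GV]]] HM [_ Irr] i j.
pose O := [set j | pb (exists g, G g /\ g i j != 0)].
have Oc : forall h, G h -> forall a b, a \in O -> h a b != 0 -> b \in O.
  move=> h Gh a b; rewrite !inE => /pbP [g [Gg gia]] hab; apply/pbP.
  exists (g *m h); split; first exact: GM.
  have [[s Hs] _] := HM g Gg.
  rewrite (mulmx_row1 g h i b a); first by rewrite mulf_neq0.
  by move=> k; apply: mono_off Hs gia.
have Oi : i \in O.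
  rewrite inE; apply/pbP; exists 1%:M; split => //; by rewrite mxE eqxx oner_eq0.
pose U := \matrix_(a, b) ((a == b) && (a \in O))%:R : 'M[F]_p.
have Uoff : forall a b, a != b -> U a b = 0.
  by move=> a b /negbTE ab; rewrite mxE ab.
have Ud : forall a, U a a = (a \in O)%:R by move=> a; rewrite mxE eqxx.
have St : forall g, G g -> stablemx U g.
  move=> g Gg.
  have -> : U *m g = (U *m g) *m U.
    apply/matrixP => a b.
    rewrite (mulmx_col1 (U *m g) U a b b); last by move=> k kb; apply: Uoff.
    rewrite !(mulmx_row1 U g a b a); last by move=> k ka; apply: Uoff; rewrite eq_sym.
    rewrite !Ud; case aO: (a \in O); last by rewrite !mul0r.
    case: (eqVneq (g a b) 0) => [->|gab]; first by rewrite mulr0 mul0r.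
    by rewrite (Oc g Gg a b aO gab) mulr1.
  exact: submxMl.
case: (Irr U St) => [/eqP|] rk.
  move: rk; rewrite mxrank_eq0 => /eqP U0.
  have := Ud i; rewrite U0 Oi mxE => /eqP; by rewrite eq_sym oner_eq0.
have Uu : U \in unitmx by rewrite -row_free_unit /row_free rk.
have [k Ujk] := unit_row_nz U j Uu.
have : j \in O.
  move: Ujk; rewrite mxE; by case: (j == k); case: (j \in O); rewrite //= eqxx.
by rewrite inE => /pbP.
Qed.

Definition Rel (F : fieldType) (p : nat) (G : 'M[F]_p -> Prop) (i k : 'I_p) : Prop :=
  forall a, G a -> diagD a -> a i i = a k k.
Arguments Rel {F p}.

Lemma Rinv (F : fieldType) (p : nat) (G : 'M[F]_p -> Prop) :
  is_subgroup_GL G -> (forall g, G g -> Mtilde g) ->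
  forall g (s : 'S_p), G g -> (forall i j, g i j != 0 <-> j = s i) ->
  forall i k, Rel G i k -> Rel G (s i) (s k).
Proof.
move=> [G1 [Gu [GM GV]]] HM g s Gg Hs i k Rik a Ga Da.
pose b := g *m a *m invmx g.
have Gb : G b by apply: (GM); [apply: (GM) | apply: (GV)].
have bg : b *m g = g *m a by rewrite -mulmxA mulVmx ?mulmx1 //; apply: Gu.
have [[t Ht] _] := HM b Gb.
have gx : forall x, g x (s x) != 0 by move=> x; apply/(Hs x (s x)).
have tx : forall x, t x = x /\ b x x = a (s x) (s x).
  move=> x.
  have bx : b x (t x) != 0 by apply/(Ht x (t x)).
  have := congr1 (fun M : 'M[F]_p => M x (s x)) bg => /=.
  rewrite (mulmx_row1 b g x (s x) (t x)); last by move=> c; apply: mono_off Ht bx.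
  rewrite (mulmx_row1 g a x (s x) (s x)); last by move=> c; apply: mono_off Hs (gx x).
  move=> e.
  have ne : g (t x) (s x) != 0.
    apply/negP => /eqP z; move: e; rewrite z mulr0 => /eqP; rewrite eq_sym mulf_eq0.
    by rewrite (negbTE (gx x)) (negbTE (diag_nz a _ Da)).
  have tx : t x = x.
    by apply: (@perm_inj _ s); symmetry; apply/(Hs (t x) (s x)).
  split => //; move: e; rewrite tx mulrC; exact: (mulfI (gx x)).
have Db : diagD b.
  split; last exact: Gu.
  apply/is_diag_mxP => x y xy.
  have bx : b x (t x) != 0 by apply/(Ht x (t x)).
  apply: mono_off Ht bx _; rewrite (proj1 (tx x)); apply/negP => /eqP yx.
  by move: xy; rewrite yx eqxx.
have := Rik b Gb Db; by rewrite (proj2 (tx i)) (proj2 (tx k)).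
Qed.

Lemma Rtriv (F : fieldType) (p : nat) (G : 'M[F]_p -> Prop) :
  prime p -> is_subgroup_GL G -> (forall g, G g -> Mtilde g) ->
  irreducible_mxgroup G -> (exists a, G a /\ diagD a /\ ~ Defs.scalarZ a) ->
  forall i k, Rel G i k -> i = k.
Proof.
move=> pp HG HM Irr [a0 [Ga0 [Da0 nS]]] i k Rik.
pose Rb := fun x y : 'I_p => pb (Rel G x y).
pose C := fun x => [set y in [set: 'I_p] | Rb x y].
have le : forall x y, (#|C x| <= #|C y|)%N.
  move=> x y; have [g [Gg gxy]] := transG F p G HG HM Irr x y.
  have [[s Hs] _] := HM g Gg.
  have -> : y = s x by apply/(Hs x y).
  rewrite -(card_imset (C x) (@perm_inj _ s)); apply: subset_leq_card.
  apply/subsetP => z /imsetP [u]; rewrite !inE /= => /pbP Rxu ->.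
  by apply/pbP; apply: (Rinv F p G HG HM g s Gg Hs).
have ceq : forall x, #|C x| = #|C i| by move=> x; apply/eqP; rewrite eqn_leq !le.
have eqR : {in [set: 'I_p] & &, equivalence_rel Rb}.
  move=> x y z _ _ _; split; first by apply/pbP => a _ _.
  move=> /pbP Rxy; apply/idP/idP => /pbP H; apply/pbP => a Ga Da.
    by rewrite -(Rxy a Ga Da) (H a Ga Da).
  by rewrite (Rxy a Ga Da) (H a Ga Da).
have Pp := equivalence_partitionP eqR.
have Hu : {in equivalence_partition Rb [set: 'I_p], forall A : {set 'I_p}, #|A| = #|C i|}.
  by move=> A /imsetP [x _ ->]; exact: ceq x.
have := card_uniform_partition Hu Pp; rewrite cardsT card_ord => pe.
have dv : (#|C i| %| p)%N by apply/dvdnP; exists #|equivalence_partition Rb [set: 'I_p]|.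
case/primeP: pp => _ /(_ _ dv) /orP [] c1.
  have [x Cx] := cards1P c1.
  have : i \in C i by rewrite !inE; apply/pbP => a _ _.
  have : k \in C i by rewrite !inE; apply/pbP.
  by rewrite Cx !inE => /eqP -> /eqP ->.
exfalso; apply: nS; exists (a0 i i); split; first exact: diag_nz.
have CT : C i = [set: 'I_p].
  apply/eqP; rewrite eqEcard subsetT /=.
  by rewrite cardsT card_ord (eqP c1).
apply/matrixP => x y; rewrite !mxE.
case: (eqVneq x y) => [<-|xy] /=.
  have : x \in C i by rewrite CT inE.
  by rewrite !inE /= => /pbP /(_ a0 Ga0 Da0) ->; rewrite mulr1n.
rewrite mulr0n; move: Da0 => [/is_diag_mxP D _]; apply: D; exact: xy.
Qed.

Lemma main (F : fieldType) (p : nat) (G : 'M[F]_p -> Prop) (w : 'M[F]_p) :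
  prime p ->
  is_subgroup_GL G ->
  (forall g, G g -> Mtilde g) ->
  irreducible_mxgroup G ->
  (exists a, G a /\ diagD a /\ ~ Defs.scalarZ a) ->
  w \in unitmx ->
  (forall g, G g -> Mtilde (invmx w *m g *m w)) ->
  (forall a, G a -> diagD a -> diagD (invmx w *m a *m w)) ->
  monomial_mx w /\
  (GRing.closed_field_axiom F -> exists c : F, Mtilde (c *: w)).
Proof.
move=> pp HG HM Irr Ha wu Hc Hd.
have colu : forall i k j, w i j != 0 -> w k j != 0 -> i = k.
  move=> i k j wij wkj; apply: (Rtriv F p G pp HG HM Irr Ha) => a Ga Da.
  have [Dd _] := Hd a Ga Da.
  have e : a *m w = w *m (invmx w *m a *m w) by rewrite !mulmxA mulmxV // mul1mx.
  have key : forall x, w x j != 0 -> a x x = (invmx w *m a *m w) j j.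
    move=> x wx; have := congr1 (fun M : 'M[F]_p => M x j) e => /=.
    rewrite (mulmx_row1 a w x j x); last first.
      by move=> c cx; case: Da => /is_diag_mxP D _; apply: D; rewrite eq_sym.
    rewrite (mulmx_col1 w _ x j j); last first.
      by move=> c cx; move/is_diag_mxP: Dd => D; apply: D.
    by rewrite [w x j * _]mulrC => /(mulIf wx).
  by rewrite (key i wij) (key k wkj).
pose f := fun i => xchoose (unit_row_nz w i wu).
have fP : forall i, w i (f i) != 0 by move=> i; exact: (xchooseP (unit_row_nz w i wu)).
have finj : injective f by move=> x y fxy; apply: (colu x y (f x)) => //; rewrite fxy.
have mono : monomial_mx w.
  exists (perm finj) => i j; split.
    move=> wij; set s := perm finj.
    have h : w (s^-1 j)%g j != 0.
      have := fP (s^-1 j)%g.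
      have -> : f (s^-1 j)%g = j by rewrite -[RHS](permKV s j) /s permE.
      done.
    by rewrite (colu i _ j wij h) permKV.
  by move=> ->; rewrite permE.
split => // _.
case: mono => s Hs.
have rnz : forall x, w x (s x) != 0 by move=> x; apply/(Hs x (s x)).
pose i0 := Ordinal (prime_gt0 pp).
exists (w i0 (s i0))^-1.
have cnz : (w i0 (s i0))^-1 != 0 by rewrite invr_eq0.
split.
  exists s => i j; rewrite mxE mulf_eq0 negb_or cnz /=; exact: Hs.
move=> i j; rewrite mxE mulf_eq0 negb_or cnz /= => /(proj1 (Hs i j)) ->.
have [g [Gg gij]] := transG F p G HG HM Irr i0 i.
have [[t Ht] Hr] := HM g Gg.
have [[u Hu] HrM] := Hc g Gg.
have e : g *m w = w *m (invmx w *m g *m w) by rewrite !mulmxA mulmxV // mul1mx.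
have := congr1 (fun M : 'M[F]_p => M i0 (s i)) e => /=.
rewrite (mulmx_row1 g w i0 (s i) i); last by move=> c; apply: mono_off Ht gij.
rewrite (mulmx_row1 w _ i0 (s i) (s i0)); last by move=> c; apply: mono_off Hs (rnz i0).
set M := (invmx w *m g *m w) (s i0) (s i) => eq.
have Mnz : M != 0.
  apply/negP => /eqP M0; move: eq; rewrite M0 mulr0 => /eqP; rewrite mulf_eq0.
  by rewrite (negbTE gij) (negbTE (rnz i)).
have -> : (w i0 (s i0))^-1 * w i (s i) = M * (g i0 i)^-1.
  have -> : w i (s i) = (g i0 i)^-1 * (w i0 (s i0) * M) by rewrite -eq mulKf.
  by rewrite mulrCA mulKf ?rnz // mulrC.
apply: root_mul; first exact: HrM.
apply: root_inv; exact: Hr.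
Qed.

End Helpers.

Theorem theorem2p10 (F : fieldType) (p : nat) (G : 'M[F]_p -> Prop) (w : 'M[F]_p) :
  prime p ->
  is_subgroup_GL G ->
  (forall g, G g -> Mtilde g) ->
  irreducible_mxgroup G ->
  (exists a, G a /\ diagD a /\ ~ scalarZ a) ->
  w \in unitmx ->
  (forall g, G g -> Mtilde (invmx w *m g *m w)) ->
  (forall a, G a -> diagD a -> diagD (invmx w *m a *m w)) ->
  monomial_mx w /\
  (GRing.closed_field_axiom F -> exists c : F, Mtilde (c *: w)).
Proof. exact: Helpers.main. Qed.
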